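(* Let $\mathcal{A}$ be a finite set of positive integers, let $k$ be an odd positive integer, and let $w \leqslant z$ be real numbers. Then $$ S(\mathcal{A}, z) \leqslant \sum_{r=0}^{k-1} (-1)^r \frac{k-r}{k} \sum_{w \leqslant p_r < p_{r-1} < \cdots < p_1 < z} S\left(\mathcal{A}_{p_1 p_2 \cdots p_r}, w\right), $$ that is, $$ S(\mathcal{A}, z) \leqslant S(\mathcal{A}, w) - \frac{k-1}{k}\sum_{w \leqslant p_1 < z} S(\mathcal{A}_{p_1}, w) + \frac{k-2}{k}\sum_{w \leqslant p_2 < p_1 < z} S(\mathcal{A}_{p_1p_2}, w) - \frac{k-3}{k}\sum_{w \leqslant p_3<p_2 < p_1 < z} S(\mathcal{A}_{p_1p_2p_3}, w) + \cdots - \frac{2}{k}\sum_{w \leqslant p_{k-2}<\cdots < p_1 < z} S(\mathcal{A}_{p_1\cdots p_{k-2}}, w) + \frac{1}{k}\sum_{w \leqslant p_{k-1}<\cdots < p_1 < z} S(\mathcal{A}_{p_1\cdots p_{k-1}}, w), $$ where the $r=0$ term is $S(\mathcal{A}, w)$.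
   Context: Throughout, $p, p_1, p_2, \dots$ denote prime numbers. For a finite set $\mathcal{A}$ of positive integers and a positive integer $d$, $\mathcal{A}_d = \{a : ad \in \mathcal{A}\}$. For real $z$, $S(\mathcal{A}, z)$ denotes the number of $a \in \mathcal{A}$ with $\gcd\left(a, \prod_{p<z} p\right) = 1$, i.e. the number of elements of $\mathcal{A}$ having no prime factor less than $z$. *)

(* Defs.v *)
From mathcomp Require Import all_boot all_order all_algebra.
Set Implicit Arguments. Unset Strict Implicit. Unset Printing Implicit Defensive.
Import Order.TTheory GRing.Theory Num.Theory.
Local Open Scope ring_scope.

(* A finite set of positive integers is represented by a duplicate-free
   sequence of naturals, all positive. *)

Definition sieve_sub (A : seq nat) (d : nat) : seq nat :=
  [seq (a %/ d)%N | a <- A & (d %| a)%N].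

(* a has no prime factor less than z (primes dividing a > 0 are <= a) *)
Definition rough {R : numDomainType} (z : R) (a : nat) : bool :=
  [forall p : 'I_a.+1, (prime p && ((p : nat)%:R < z)) ==> ~~ (p %| a)%N].

Definition S {R : numDomainType} (A : seq nat) (z : R) : nat :=
  count (rough z) A.

Definition prime_chain {R : numDomainType} (w z : R) (n r : nat)
    (t : r.-tuple 'I_n) : bool :=
  all (fun p : 'I_n => prime p && (w <= (p : nat)%:R) && ((p : nat)%:R < z))
      (tval t)
  && sorted (fun p q : 'I_n => (q < p)%N) (tval t).

(* Main.v *)
Require Import Defs.
From mathcomp Require Import all_boot all_order all_algebra.
From mathcomp Require Import reals.
Import Order.TTheory GRing.Theory Num.Theory.
Local Open Scope ring_scope.

From mathcomp Require Import ring lra.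
Set Implicit Arguments. Unset Strict Implicit.
Lemma card_dec n r (P : {set 'I_n}) :
  #|[set t : r.-tuple 'I_n | all (mem P) t && sorted (fun p q : 'I_n => (q < p)%N) t]| = 'C(#|P|, r).
Proof.
rewrite -cards_draws.
set B := [set t : r.-tuple 'I_n | _].
pose f (t : r.-tuple 'I_n) := [set i in t].
have gt_trans : transitive (fun p q : 'I_n => (q < p)%N).
  by move=> y x z' /= h1 h2; exact: ltn_trans h2 h1.
have gt_irr : irreflexive (fun p q : 'I_n => (q < p)%N) by move=> x; exact: ltnn.
rewrite -(card_in_imset (f:=f) (D:=B)); last first.
  move=> t1 t2; rewrite !inE => /andP[_ s1] /andP[_ s2] e.
  apply: val_inj; apply: (irr_sorted_eq gt_trans gt_irr s1 s2) => x.
  by have := congr1 (fun X : {set 'I_n} => x \in X) e; rewrite /f !inE.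
apply: eq_card => X; rewrite inE.
apply/imsetP/andP => [[t] | [sXP /eqP cX]].
  rewrite inE => /andP[aP st] ->; split.
    by apply/subsetP => x; rewrite inE => /(allP aP).
  rewrite cardsE (card_uniqP _) ?size_tuple //.
  exact: sorted_uniq gt_trans gt_irr _ st.
have hs : size (rev (enum X)) == r by rewrite size_rev -cardE cX.
exists (Tuple hs); last by apply/setP => x; rewrite /f inE /= mem_rev mem_enum.
rewrite inE /=; apply/andP; split.
  by apply/allP => x; rewrite mem_rev mem_enum => /(subsetP sXP).
have inc_A : sorted ltn (map val (enum X)).
  rewrite -[enum _](eq_filter (mem_enum _)).
  rewrite -(eq_filter (mem_map val_inj _)) -filter_map.
  by rewrite (sorted_filter ltn_trans) // unlock val_ord_enum iota_ltn_sorted.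
by rewrite rev_sorted; move: inc_A; rewrite sorted_map.
Qed.
Section Binom.
Variable R : realFieldType.
Definition FF (m k : nat) : R := \sum_(r < k) (-1) ^+ r * (k - r)%:R * ('C(m, r))%:R.
Definition GG (m j : nat) : R := \sum_(r < j.+1) (-1) ^+ r * ('C(m, r))%:R.

Lemma GG_S m j : GG m.+1 j = (-1) ^+ j * ('C(m, j))%:R.
Proof.
elim: j => [|j IH]; first by rewrite /GG big_ord1 !bin0.
rewrite /GG big_ord_recr /= -/(GG m.+1 j) IH binS natrD exprS; ring.
Qed.

Lemma FF_S m k : FF m k.+1 = FF m k + GG m k.
Proof.
rewrite /FF /GG.
rewrite [X in _ = X + _](_ : _ = \sum_(r < k.+1) (-1) ^+ r * (k - r)%:R * ('C(m, r))%:R).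
  rewrite -big_split /=; apply: eq_bigr => i _.
  rewrite subSn; last by rewrite -ltnS.
  rewrite mulrSr; ring.
by rewrite big_ord_recr /= subnn mulr0 mul0r addr0.
Qed.

Lemma FF_SS m k : FF m.+1 k.+1 = GG m k.
Proof.
elim: k => [|k IH].
  rewrite /FF /GG !big_ord1 /= !bin0 subn0 expr0.
  by rewrite !mul1r.
rewrite (FF_S m.+1 k.+1).
by rewrite IH GG_S /GG [in RHS]big_ord_recr.
Qed.

Lemma binom_ineq m k : odd k ->
  (m == 0)%N%:R <= \sum_(r < k) (-1) ^+ r * ((k - r)%:R / k%:R) * ('C(m, r))%:R :> R.
Proof.
case: k => [//|k] /= ek.
have kpos : 0 < (k.+1)%:R :> R by rewrite ltr0n.
have -> : \sum_(r < k.+1) (-1) ^+ r * ((k.+1 - r)%:R / (k.+1)%:R) * ('C(m, r))%:R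
   = FF m k.+1 / (k.+1)%:R :> R.
  rewrite /FF mulr_suml; apply: eq_bigr => i _; rewrite mulrA; ring.
rewrite ler_pdivlMr //.
case: m => [|[|n]].
- rewrite /FF big_ord_recl /= big1 ?addr0 ?mul1r ?bin0 ?subn0 ?mulr1 //.
  by move=> i _; rewrite bin0n mulr0.
- rewrite mul0r FF_SS /GG big_ord_recl /= big1 ?addr0 ?bin0 ?mulr1 //.
  by move=> i _; rewrite bin0n mulr0.
- rewrite mul0r FF_SS GG_S -signr_odd (negbTE ek) expr0 mul1r.
  exact: ler0n.
Qed.
End Binom.
Lemma roughP (R : numDomainType) (w : R) x : (0 < x)%N ->
  reflect (forall p, prime p -> p%:R < w -> ~~ (p %| x)%N) (rough w x).
Proof.
move=> x0; apply: (iffP forallP) => [H p pp pw | H p].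
  apply/negP => pd.
  have pl : (p < x.+1)%N by rewrite ltnS dvdn_leq.
  by have := H (Ordinal pl); rewrite /= pp pw /= pd.
by apply/implyP => /andP[pp pw]; apply: H.
Qed.

Lemma rough_div (R : numDomainType) (w : R) x d : (0 < x)%N -> (d %| x)%N ->
  rough w x -> rough w (x %/ d).
Proof.
move=> x0 dx /(roughP w x0) H.
have d0 : (0 < d)%N by case: d dx => //; rewrite dvd0n => /eqP x0'; rewrite x0' in x0.
have xd0 : (0 < x %/ d)%N by rewrite divn_gt0 // dvdn_leq.
apply/(roughP w xd0) => p pp pw; apply/negP => pd.
by have := H p pp pw; rewrite (dvdn_trans pd (dvdn_div dx)).
Qed.

Lemma prod_dvd n (s : seq 'I_n) a : uniq s -> all (fun p : 'I_n => prime p) s ->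
  all (fun p : 'I_n => (p %| a)%N) s -> (\prod_(p <- s) (p : nat) %| a)%N.
Proof.
elim: s => [|p s IH] /=; first by rewrite big_nil dvd1n.
move=> /andP[ps us] /andP[pp ps'] /andP[pa sa].
rewrite big_cons.
have cop : coprime p (\prod_(q <- s) (q : nat)); last by rewrite (Gauss_dvd _ cop) pa IH.
rewrite prime_coprime // Euclid_dvd_prod // big_has_cond; apply/hasPn => q qs /=.
have qp : prime q by exact: (allP ps' q qs).
rewrite dvdn_prime2 //; apply/eqP => e.
have epq : p = q by apply: val_inj.
by rewrite epq qs in ps.
Qed.

Lemma dvd_prod_mem n (s : seq 'I_n) (p : 'I_n) : p \in s ->
  ((p : nat) %| \prod_(q <- s) (q : nat))%N.
Proof. by move=> ps; rewrite (big_rem _ ps) /= dvdn_mulr. Qed.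

Lemma main_a (R : realType) (k : nat) (w z : R) (a : nat) :
  (0 < a)%N -> odd k -> w <= z ->
  (rough z a)%:R <= \sum_(r < k) (-1) ^+ r * ((k - r)%:R / k%:R) *
      \sum_(t : r.-tuple 'I_(Num.truncn z).+1 | prime_chain w z t)
        ((\prod_(p <- tval t) (p : nat) %| a)%N
          && rough w (a %/ \prod_(p <- tval t) (p : nat))%N)%:R :> R.
Proof.
move=> a0 ok wz.
set n := (Num.truncn z).+1.
have gt_trans : transitive (fun p q : 'I_n => (q < p)%N).
  by move=> y x z' /= h1 h2; exact: ltn_trans h2 h1.
have gt_irr : irreflexive (fun p q : 'I_n => (q < p)%N) by move=> x; exact: ltnn.
have rzw : rough z a -> rough w a.
  move/(roughP z a0) => H; apply/(roughP w a0) => p pp pw.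
  exact: H pp (lt_le_trans pw wz).
case Hw: (rough w a); last first.
  rewrite (_ : rough z a = false); last by apply/negP => /rzw; rewrite Hw.
  rewrite big1 // => r _; rewrite big1 ?mulr0 // => t /andP[/allP tc _].
  move/negbT: Hw => /forallPn [p]; rewrite negb_imply negbK => /andP[/andP[pp pw] pa].
  have {pp pw pa} [q [pp pw pa]] : exists q : nat, [/\ prime q, q%:R < w & (q %| a)%N].
    by exists p.
  clear p; rename q into p.
  set d := \prod_(q <- tval t) (q : nat).
  case: (boolP (d %| a)%N) => //= da.
  have pd : ~~ (p %| d)%N.
    rewrite Euclid_dvd_prod // big_has_cond; apply/hasPn => q qt /=.
    have /andP[/andP[qp wq] _] := tc q qt.
    rewrite dvdn_prime2 //; apply/eqP => e.
    rewrite e in pw.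
    by have := lt_le_trans pw wq; rewrite ltxx.
  have d0 : (0 < d)%N.
    rewrite lt0n; apply/eqP => d0; move: da; rewrite d0 dvd0n => /eqP a00.
    by rewrite a00 in a0.
  have ad0 : (0 < a %/ d)%N by rewrite divn_gt0 // dvdn_leq.
  have pad : (p %| a %/ d)%N.
    by move: pa; rewrite -{1}(divnK da) Euclid_dvdM // (negbTE pd) orbF.
  rewrite (_ : rough w (a %/ d) = false) //; apply/negP => /(roughP w ad0) H.
  by have := H p pp pw; rewrite pad.
set P := [set p : 'I_n | prime p && (w <= (p : nat)%:R) && ((p : nat)%:R < z) && (p %| a)%N].
have key r (t : r.-tuple 'I_n) : prime_chain w z t && (\prod_(p <- tval t) (p:nat) %| a)%N
    = all (mem P) t && sorted (fun p q : 'I_n => (q < p)%N) t.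
  apply/idP/idP.
  - case/andP => /andP[/allP tc st] da; rewrite st andbT; apply/allP => p pt.
    change (p \in P); rewrite /P inE. by rewrite tc //= (dvdn_trans (dvd_prod_mem pt) da).
  - case/andP => /allP tP st.
    have tc : all (fun p : 'I_n => prime p && (w <= (p : nat)%:R) && ((p : nat)%:R < z)) t.
      by apply/allP => p /tP tp; move: (tp : p \in P); rewrite /P inE => /andP[].
    rewrite /prime_chain tc st /=; apply: prod_dvd.
    + exact: sorted_uniq gt_trans gt_irr _ st.
    + by apply/allP => p /tP tp; move: (tp : p \in P); rewrite /P inE => /andP[/andP[/andP[]]].
    + by apply/allP => p /tP tp; move: (tp : p \in P); rewrite /P inE => /andP[].
have Hcnt r : \sum_(t : r.-tuple 'I_n | prime_chain w z t)
        ((\prod_(p <- tval t) (p : nat) %| a)%N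
          && rough w (a %/ \prod_(p <- tval t) (p : nat))%N)%:R = ('C(#|P|, r))%:R :> R.
  rewrite -card_dec -sum1_card natr_sum big_mkcond [RHS]big_mkcond /=.
  apply: eq_bigr => t _.
  rewrite inE -key; case: (prime_chain w z t) => //=.
  by case da: (_ %| a)%N => //=; rewrite rough_div.
have Hz : rough z a = (#|P| == 0)%N.
  apply/idP/idP.
  - move/(roughP z a0) => H; rewrite cards_eq0; apply/eqP/setP => p.
    rewrite /P inE in_set0; apply/negP => /andP[/andP[/andP[pp _] pz] pa].
    by have := H p pp pz; rewrite pa.
  - move=> /eqP c0; apply/(roughP z a0) => p pp pz; apply/negP => pa.
    have [pw | wp] := ltP (p%:R) w.
      by move/(roughP w a0): Hw => /(_ p pp pw); rewrite pa.
    have pn : (p < n)%N.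
      have z0 : 0 <= z := le_trans (ler0n _ p) (ltW pz).
      by rewrite ltnS (truncn_ge_nat p z0) ltW.
    have : Ordinal pn \in P by rewrite /P inE /= pp wp pz pa.
    by rewrite (card0_eq c0).
rewrite Hz; under eq_bigr => r _ do rewrite Hcnt.
exact: binom_ineq.
Qed.

Unset Implicit Arguments.
Unset Strict Implicit.

Theorem theorem1 (R : realType) (A : seq nat) (k : nat) (w z : R) :
  uniq A -> all (fun a => (0 < a)%N) A ->
  odd k -> w <= z ->
  (S A z)%:R <=
    \sum_(r < k)
      (-1) ^+ r * ((k - r)%:R / k%:R) *
      \sum_(t : r.-tuple 'I_(Num.truncn z).+1 | prime_chain w z t)
        (S (sieve_sub A (\prod_(p <- tval t) (p : nat))%N) w)%:R :> R.
Proof.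
move=> uA pA ok wz.
have HS d : (S (sieve_sub A d) w)%:R = \sum_(a <- A) ((d %| a)%N && rough w (a %/ d)%N)%:R :> R.
  rewrite /S /sieve_sub count_map count_filter -sum1_count natr_sum big_mkcond /=.
  by apply: eq_bigr => a _; rewrite /= andbC; case: (_ && _).
have HL : (S A z)%:R = \sum_(a <- A) (rough z a)%:R :> R.
  rewrite /S -sum1_count natr_sum big_mkcond /=.
  by apply: eq_bigr => a _; case: (rough z a).
rewrite HL.
rewrite [X in _ <= X](_ : _ = \sum_(a <- A) \sum_(r < k)
     (-1) ^+ r * ((k - r)%:R / k%:R) *
      \sum_(t : r.-tuple 'I_(Num.truncn z).+1 | prime_chain w z t)
        ((\prod_(p <- tval t) (p : nat) %| a)%N
          && rough w (a %/ \prod_(p <- tval t) (p : nat))%N)%:R); last first.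
  rewrite exchange_big /=; apply: eq_bigr => r _; rewrite -mulr_sumr; congr (_ * _).
  by rewrite exchange_big /=; apply: eq_bigr => t _; exact: HS.
rewrite !big_seq; apply: ler_sum => a aA.
by apply: main_a => //; exact: (allP pA a aA).
Qed.
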